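(* Let $(A,\circ,[\cdot,\cdot])$ be a dual pre-Poisson algebra and $(V;l_\circ,r_\circ,l_{[\cdot,\cdot]},r_{[\cdot,\cdot]})$ a finite-dimensional representation of it. Then $(V^*;-l_\circ^*,-l_\circ^*+r_\circ^*,l_{[\cdot,\cdot]}^*,-l_{[\cdot,\cdot]}^*-r_{[\cdot,\cdot]}^* )$ is a representation of $(A,\circ,[\cdot,\cdot])$. Consequently, $A\oplus V^*$ with $$(x+u^* )\circ(y+v^* )=x\circ y-l_\circ^*(x)v^*+(-l_\circ^*+r_\circ^* )(y)u^*,$$ $$[x+u^*,y+v^*]=[x,y]+l_{[\cdot,\cdot]}^*(x)v^*-(l_{[\cdot,\cdot]}^*+r_{[\cdot,\cdot]}^* )(y)u^*$$ is a dual pre-Poisson algebra.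
   Context: Field $\mathbb{F}$ of characteristic $0$. For $f:A\to\mathrm{End}(V)$, $f^*:A\to\mathrm{End}(V^* )$ is given by $\langle f^*(x)v^*,u\rangle=-\langle v^*,f(x)u\rangle$. A dual pre-Poisson algebra $(A,\circ,[\cdot,\cdot])$: $x\circ(y\circ z)=(x\circ y)\circ z=(y\circ x)\circ z$; $[x,[y,z]]=[[x,y],z]+[y,[x,z]]$; $[x,y\circ z]=[x,y]\circ z+y\circ[x,z]$; $[x\circ y,z]=x\circ[y,z]+y\circ[x,z]$; $[x,y]\circ z=-[y,x]\circ z$. A representation $(V;l_\circ,r_\circ,l_{[\cdot,\cdot]},r_{[\cdot,\cdot]})$ is a vector space $V$ with linear maps $A\to\mathrm{End}(V)$ satisfying, for all $x,y\in A$: $r_\circ(x)r_\circ(y)=r_\circ(y\circ x)=l_\circ(y)r_\circ(x)=r_\circ(x)l_\circ(y)$; $l_\circ(x\circ y)=l_\circ(x)l_\circ(y)=l_\circ(y)l_\circ(x)$; $l_{[\cdot,\cdot]}([x,y])=l_{[\cdot,\cdot]}(x)l_{[\cdot,\cdot]}(y)-l_{[\cdot,\cdot]}(y)l_{[\cdot,\cdot]}(x)$; $r_{[\cdot,\cdot]}([x,y])=r_{[\cdot,\cdot]}(y)r_{[\cdot,\cdot]}(x)+l_{[\cdot,\cdot]}(x)r_{[\cdot,\cdot]}(y)$; $r_{[\cdot,\cdot]}(x)r_{[\cdot,\cdot]}(y)=-r_{[\cdot,\cdot]}(x)l_{[\cdot,\cdot]}(y)$; $r_{[\cdot,\cdot]}(x\circ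 y)=r_\circ(y)r_{[\cdot,\cdot]}(x)+l_\circ(x)r_{[\cdot,\cdot]}(y)$; $l_{[\cdot,\cdot]}(x)r_\circ(y)=r_\circ(y)l_{[\cdot,\cdot]}(x)+r_\circ([x,y])$; $l_{[\cdot,\cdot]}(x)l_\circ(y)=l_\circ([x,y])+l_\circ(y)l_{[\cdot,\cdot]}(x)$; $r_{[\cdot,\cdot]}(x)r_\circ(y)=r_\circ([y,x])+l_\circ(y)r_{[\cdot,\cdot]}(x)$; $l_{[\cdot,\cdot]}(x\circ y)=l_\circ(x)l_{[\cdot,\cdot]}(y)+l_\circ(y)l_{[\cdot,\cdot]}(x)$; $r_{[\cdot,\cdot]}(x)(l_\circ-r_\circ)(y)=0$; $r_\circ(x)(l_{[\cdot,\cdot]}+r_{[\cdot,\cdot]})(y)=0$; $l_\circ([x,y]+[y,x])=0$. *)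

(* Defs.v *)
From HB Require Import structures.
From mathcomp Require Import all_boot all_order all_algebra.
Set Implicit Arguments. Unset Strict Implicit. Unset Printing Implicit Defensive.
Import GRing.Theory.
Local Open Scope ring_scope.

Section DPP.
Variable F : fieldType.

Definition is_dual_prepoisson (A : lmodType F)
  (mul br : A -> A -> A) : Prop :=
  (forall (a : F) (x y z : A),
         mul (a *: x + y) z = a *: mul x z + mul y z /\
         mul z (a *: x + y) = a *: mul z x + mul z y /\
         br (a *: x + y) z = a *: br x z + br y z /\
         br z (a *: x + y) = a *: br z x + br z y) /\
      (forall x y z, mul x (mul y z) = mul (mul x y) z /\
                     mul (mul x y) z = mul (mul y x) z) /\
      (forall x y z, br x (br y z) = br (br x y) z + br y (br x z)) /\
      (forall x y z, br x (mul y z) = mul (br x y) z + mul y (br x z)) /\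
      (forall x y z, br (mul x y) z = mul x (br y z) + mul y (br x z)) /\
    (forall x y z, mul (br x y) z = - mul (br y x) z).

Definition is_rep (A : lmodType F) (mul br : A -> A -> A) (V : vectType F)
  (lo ro lb rb : A -> 'End(V)) : Prop :=
  (linear_for *:%R lo /\ linear_for *:%R ro /\
      linear_for *:%R lb /\ linear_for *:%R rb) /\
      (forall x y, (ro x \o ro y)%VF = ro (mul y x) /\
                   ro (mul y x) = (lo y \o ro x)%VF /\
                   (lo y \o ro x)%VF = (ro x \o lo y)%VF) /\
      (forall x y, lo (mul x y) = (lo x \o lo y)%VF /\
                   (lo x \o lo y)%VF = (lo y \o lo x)%VF) /\
      (forall x y, lb (br x y) = (lb x \o lb y)%VF - (lb y \o lb x)%VF) /\
      (forall x y, rb (br x y) = (rb y \o rb x)%VF + (lb x \o rb y)%VF) /\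
      (forall x y, (rb x \o rb y)%VF = - (rb x \o lb y)%VF) /\
      (forall x y, rb (mul x y) = (ro y \o rb x)%VF + (lo x \o rb y)%VF) /\
      (forall x y, (lb x \o ro y)%VF = (ro y \o lb x)%VF + ro (br x y)) /\
      (forall x y, (lb x \o lo y)%VF = lo (br x y) + (lo y \o lb x)%VF) /\
      (forall x y, (rb x \o ro y)%VF = ro (br y x) + (lo y \o rb x)%VF) /\
      (forall x y, lb (mul x y) = (lo x \o lb y)%VF + (lo y \o lb x)%VF) /\
      (forall x y, (rb x \o (lo y - ro y))%VF = 0) /\
      (forall x y, (ro x \o (lb y + rb y))%VF = 0) /\
    (forall x y, lo (br x y + br y x) = 0).

Definition dualsp (V : vectType F) : vectType F := 'Hom(V, F^o).

(* f^* for g = f(x): <g^* v*, u> = - <v*, g u>, i.e. g^* v* = - (v* o g). *)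
Definition dualmap (V : vectType F) (g : 'End(V)) : 'End(dualsp V) :=
  linfun (fun vs : dualsp V => - (vs \o g)%VF).

End DPP.

(* Main.v *)
Require Import Defs.
From HB Require Import structures.
From mathcomp Require Import all_boot all_order all_algebra.
From mathcomp Require Import ring.
Import GRing.Theory.
Local Open Scope ring_scope.

Lemma dualmapE (F : fieldType) (V : vectType F) (g : 'End(V)) (vs : dualsp V) (v : V) :
  dualmap g vs v = - vs (g v).
Proof.
have lin : linear (fun vs : dualsp V => - (vs \o g)%VF).
  by move=> a x y; rewrite comp_lfunDl -comp_lfunZl opprD scalerN.
pose fL : {linear dualsp V -> dualsp V} :=
  HB.pack (fun vs : dualsp V => - (vs \o g)%VF) (GRing.isLinear.Build _ _ _ _ _ lin).
rewrite /dualmap (lfunE fL) /= opp_lfunE comp_lfunE //.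
Qed.

Lemma scaleFo (F : fieldType) (c : F) (x : F^o) : c *: x = c * x.
Proof. by []. Qed.

Lemma vsZ (F : fieldType) (V : vectType F) (vs : dualsp V) (a : F) (w : V) :
  vs (a *: w) = a * vs w.
Proof. by rewrite linearZ. Qed.

Lemma vsD (F : fieldType) (V : vectType F) (vs : dualsp V) (a b : V) :
  vs (a + b) = vs a + vs b.
Proof. by rewrite raddfD. Qed.
Lemma vsN (F : fieldType) (V : vectType F) (vs : dualsp V) (a : V) :
  vs (- a) = - vs a.
Proof. by rewrite raddfN. Qed.
Lemma vs0 (F : fieldType) (V : vectType F) (vs : dualsp V) :
  vs 0 = 0.
Proof. by rewrite raddf0. Qed.
Lemma endD (F : fieldType) (V : vectType F) (f : 'End(V)) (a b : V) :
  f (a + b) = f a + f b.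
Proof. by rewrite raddfD. Qed.
Lemma endN (F : fieldType) (V : vectType F) (f : 'End(V)) (a : V) :
  f (- a) = - f a.
Proof. by rewrite raddfN. Qed.

Lemma pairZD (F : fieldType) (A : lmodType F) (W : vectType F) (a : F)
  (x y : A) (u v : W) :
  a *: ((x, u) : (A * W)%type) + (y, v) = (a *: x + y, a *: u + v).
Proof. by []. Qed.

Ltac simp1 := rewrite ?comp_lfunE ?add_lfunE ?opp_lfunE ?scale_lfunE ?zero_lfunE ?dualmapE
   ?endD ?endN ?vsD ?vsN ?vs0 ?vsZ ?scaleFo ?opprK.
Ltac simp := do 3 simp1.

Ltac norm R := do 4 (simp; rewrite ?R).

Ltac fixlo R4 R15 lo mul br :=
  repeat match goal with
  | |- context [@fun_of_lfun _ _ _ (lo (mul ?a ?b)) ?v] =>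
      match goal with |- context [@fun_of_lfun _ _ _ (lo (mul b a)) v] =>
        tryif constr_eq a b then fail else rewrite (R4 b a v) end
  | |- context [@fun_of_lfun _ _ _ (lo (br ?a ?b)) ?v] =>
      match goal with |- context [@fun_of_lfun _ _ _ (lo (br b a)) v] =>
        tryif constr_eq a b then fail else rewrite (R15 a b v) end
  end; simp.

Ltac fin R4 R15 lo mul br := first [ring | fixlo R4 R15 lo mul br; ring].

Theorem proposition2p30 (F : fieldType) (hF : [pchar F] =i pred0)
  (A : lmodType F) (mul br : A -> A -> A) (V : vectType F)
  (lo ro lb rb : A -> 'End(V)) :
  is_dual_prepoisson mul br ->
  is_rep mul br lo ro lb rb ->
  is_rep mul br
    (fun x => - dualmap (lo x))
    (fun x => - dualmap (lo x) + dualmap (ro x))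
    (fun x => dualmap (lb x))
    (fun x => - dualmap (lb x) - dualmap (rb x))
  /\
  is_dual_prepoisson (A := (A * dualsp V)%type)
    (fun p q => (mul p.1 q.1,
                 - dualmap (lo p.1) q.2
                 + (- dualmap (lo q.1) + dualmap (ro q.1)) p.2))
    (fun p q => (br p.1 q.1,
                 dualmap (lb p.1) q.2
                 - (dualmap (lb q.1) + dualmap (rb q.1)) p.2)).
Proof.
move=> HA HR.
have [[llo [lro [llb lrb]]] [H1 [H2 [H3 [H4 [H5 [H6 [H7 [H8 [H9 [H10 [H11 [H12 H13]]]]]]]]]]]]] := HR.
have loD x y : lo (x + y) = lo x + lo y by have := llo 1 x y; rewrite !scale1r.
have r1 x y v : ro x (ro y v) = ro (mul y x) v.
  by rewrite -comp_lfunE (proj1 (H1 x y)).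
have r2 x y v : lo y (ro x v) = ro (mul y x) v.
  by rewrite -comp_lfunE (proj1 (proj2 (H1 x y))).
have r3 x y v : ro x (lo y v) = ro (mul y x) v.
  by rewrite -comp_lfunE -(proj2 (proj2 (H1 x y))) (proj1 (proj2 (H1 x y))).
have r4 x y v : lo x (lo y v) = lo (mul x y) v.
  by rewrite -comp_lfunE (proj1 (H2 x y)).
have r4c x y v : lo (mul x y) v = lo (mul y x) v.
  by rewrite (proj1 (H2 x y)) (proj2 (H2 x y)) (proj1 (H2 y x)).
have r5 x y v : lb (br x y) v = lb x (lb y v) - lb y (lb x v).
  by rewrite H3 !lfun_simp.
have r6 x y v : rb (br x y) v = rb y (rb x v) + lb x (rb y v).
  by rewrite H4 !lfun_simp.
have r7 x y v : rb x (rb y v) = - rb x (lb y v).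
  by rewrite -comp_lfunE H5 !lfun_simp.
have r8 x y v : rb (mul x y) v = ro y (rb x v) + lo x (rb y v).
  by rewrite H6 !lfun_simp.
have r9 x y v : lb x (ro y v) = ro y (lb x v) + ro (br x y) v.
  by rewrite -comp_lfunE H7 !lfun_simp addrC.
have r10 x y v : lb x (lo y v) = lo (br x y) v + lo y (lb x v).
  by rewrite -comp_lfunE H8 !lfun_simp.
have r11 x y v : rb x (ro y v) = ro (br y x) v + lo y (rb x v).
  by rewrite -comp_lfunE H9 !lfun_simp.
have r12 x y v : lb (mul x y) v = lo x (lb y v) + lo y (lb x v).
  by rewrite H10 !lfun_simp.
have r13 x y v : rb x (lo y v) = rb x (ro y v).
  have := congr1 (fun f : 'End(V) => f v) (H11 x y).
  by rewrite /= !lfun_simp raddfB /= => /eqP; rewrite subr_eq0 => /eqP.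
have r14 x y v : ro x (rb y v) = - ro x (lb y v).
  have := congr1 (fun f : 'End(V) => f v) (H12 x y).
  by rewrite /= !lfun_simp raddfD /= => /eqP; rewrite addr_eq0 => /eqP ->; rewrite opprK.
have r15 x y v : lo (br y x) v = - lo (br x y) v.
  have := congr1 (fun f : 'End(V) => f v) (H13 x y).
  by rewrite /= loD !lfun_simp addrC => /eqP; rewrite addr_eq0 => /eqP.
pose rules := (r5, r6, r8, r12, r13, r11, r9, r10, r7, r14, r1, r2, r3, r4).
split.
  split.
    split; [|split; [|split]]; move=> a x y; apply/lfunP=> vs; apply/lfunP=> v;
      rewrite ?(llo, lro, llb, lrb); norm rules; ring.
  repeat apply: conj; move=> x y; repeat apply: conj; apply/lfunP=> vs; apply/lfunP=> v;
    rewrite ?H13; norm rules; fin r4c r15 lo mul br.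
have [HAl [HA1 [HA2 [HA3 [HA4 HA5]]]]] := HA.
split.
  move=> a [x u] [y v] [z w].
  have [e1 [e2 [e3 e4]]] := HAl a x y z.
  repeat apply: conj; lazymatch goal with |- ?L = ?R => refine (@injective_projections A (dualsp V) L R _ _) end;
   rewrite /= ?(e1,e2,e3,e4) //;
   apply/lfunP=> v0; rewrite ?(llo, lro, llb, lrb); norm rules; fin r4c r15 lo mul br.
split.
  move=> [x u] [y v] [z w]; have [e1 e2] := HA1 x y z; repeat apply: conj; lazymatch goal with |- ?L = ?R => refine (@injective_projections A (dualsp V) L R _ _) end;
   rewrite /= ?(e1,e2) //; apply/lfunP=> v0; norm rules; fin r4c r15 lo mul br.
split.
  move=> [x u] [y v] [z w]; lazymatch goal with |- ?L = ?R => refine (@injective_projections A (dualsp V) L R _ _) end; [exact: HA2 | apply/lfunP=> v0; rewrite /=]; norm rules; fin r4c r15 lo mul br.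
split.
  move=> [x u] [y v] [z w]; lazymatch goal with |- ?L = ?R => refine (@injective_projections A (dualsp V) L R _ _) end; [exact: HA3 | apply/lfunP=> v0; rewrite /=]; norm rules; fin r4c r15 lo mul br.
split.
  move=> [x u] [y v] [z w]; lazymatch goal with |- ?L = ?R => refine (@injective_projections A (dualsp V) L R _ _) end; [exact: HA4 | apply/lfunP=> v0; rewrite /=]; norm rules; fin r4c r15 lo mul br.
move=> [x u] [y v] [z w]; lazymatch goal with |- ?L = ?R => refine (@injective_projections A (dualsp V) L R _ _) end; [exact: HA5 | apply/lfunP=> v0; rewrite /=]; norm rules; fin r4c r15 lo mul br.
Qed.
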